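(* For $n\ge 3$, \begin{align*} (\underbrace{\mathfrak C_0+\cdots+\mathfrak C_0}_{7})^n&=\binom{2n-1}{6}\mathfrak C_{2n}+\frac{12n^2-60n+83}{15}\binom{2n}{2}\binom{2n-3}{4}\mathfrak C_{2n-2}\\ &\quad+\frac{(4n^2-24n+39)(12n^2-72n+109)}{15}\binom{2n}{4}\binom{2n-5}{2}\mathfrak C_{2n-4}+\binom{2n}{6}(2n-7)^6\mathfrak C_{2n-6}. \end{align*}
   Context: The numbers $\mathfrak C_{2n}$ (Cauchy numbers with level $2$) are defined by $\frac{t}{{\rm arcsinh}\,t}=\sum_{n=0}^\infty\mathfrak C_{2n}\frac{t^{2n}}{(2n)!}$. Convolution notation: $(\mathfrak C_{2j_1}+\cdots+\mathfrak C_{2j_k})^n:=\sum_{i_1+\cdots+i_k=n,\ i_1,\dots,i_k\ge0}\frac{(2n)!}{(2i_1)!\cdots(2i_k)!}\mathfrak C_{2i_1+2j_1}\cdots\mathfrak C_{2i_k+2j_k}$ (here with $k=7$ summands, all $j_i=0$). *)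

(* Defs.v *)
From mathcomp Require Import all_boot all_order all_algebra.
Set Implicit Arguments. Unset Strict Implicit. Unset Printing Implicit Defensive.
Import Order.TTheory GRing.Theory Num.Theory.
Local Open Scope ring_scope.

(* Maclaurin coefficients of arcsinh:
   arcsinh t = sum_k (-1)^k (2k)! / (4^k (k!)^2 (2k+1)) t^(2k+1),
   so arcsinh t / t = sum_k asinh_coef k * t^(2k). *)
Definition asinh_coef (k : nat) : rat :=
  (-1) ^+ k * ((2 * k)`!)%:R / ((4 ^ k * (k`!) ^ 2 * (2 * k + 1))%N)%:R.

(* Coefficients b_n of the formal power series t / arcsinh t in x = t^2,
   i.e. the formal inverse of sum_k asinh_coef k x^k:
   b_0 = 1/a_0 = 1, b_n = - sum_{k=1}^n a_k b_{n-k}. *)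
Fixpoint inv_coef_aux (fuel n : nat) : rat :=
  match fuel with
  | 0 => 0
  | S f =>
    if n is 0 then 1
    else - \sum_(k < n) asinh_coef (n - k) * inv_coef_aux f k
  end.

Definition inv_coef (n : nat) : rat := inv_coef_aux n.+1 n.

(* Cauchy numbers of level 2: t / arcsinh t = sum_n C2 n * t^(2n) / (2n)!.
   C2 n stands for \mathfrak C_{2n}. *)
Definition C2 (n : nat) : rat := ((2 * n)`!)%:R * inv_coef n.

(* Convolution (C_{2j_1} + ... + C_{2j_k})^n with all j_i = 0:
   sum over i_1+...+i_k = n of (2n)!/((2i_1)!...(2i_k)!) C_{2i_1}...C_{2i_k}. *)
Definition conv_pow (k n : nat) : rat :=
  \sum_(i : {ffun 'I_k -> 'I_n.+1} | (\sum_(j < k) (i j : nat))%N == n)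
    ((2 * n)`!)%:R / (\prod_(j < k) ((2 * i j)`!)%:R)
      * \prod_(j < k) C2 (i j).

(* Main.v *)
Require Import Defs.
From mathcomp Require Import all_boot all_order all_algebra.
From mathcomp Require Import ring lra zify.
Import Order.TTheory GRing.Theory Num.Theory.
Local Open Scope ring_scope.

Definition th (p : {poly rat}) : {poly rat} := p^`() * 'X.

Lemma coef_th p i : (th p)`_i = p`_i * i%:R.
Proof. rewrite /th coefMX; case: i => [|i] /=; first by rewrite mulr0.
by rewrite coef_deriv mulr_natr. Qed.

Lemma thD p q : th (p + q) = th p + th q.
Proof. by rewrite /th derivD mulrDl. Qed.
Lemma thN p : th (- p) = - th p.
Proof. by rewrite /th derivN mulNr. Qed.
Lemma thB p q : th (p - q) = th p - th q.
Proof. by rewrite thD thN. Qed.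
Lemma thM p q : th (p * q) = th p * q + p * th q.
Proof. rewrite /th derivM; ring. Qed.
Lemma thC c : th c%:P = 0.
Proof. by rewrite /th derivC mul0r. Qed.
Lemma thn k : th k%:R = 0.
Proof. by rewrite -polyC_natr thC. Qed.
Lemma th1 : th 1 = 0.
Proof. exact: (thn 1). Qed.
Lemma thX : th 'X = 'X.
Proof. by rewrite /th derivX mul1r. Qed.
Lemma thMn k p : th (k%:R * p) = k%:R * th p.
Proof. by rewrite thM thn mul0r add0r. Qed.
Lemma thexp p k : th (p ^+ k.+1) = k.+1%:R * p ^+ k * th p.
Proof.
elim: k => [|k IH]; first by rewrite expr1 expr0 mulr1 mul1r.
rewrite exprS thM IH; rewrite !exprS; ring.
Qed.

Definition small (N : nat) (p : {poly rat}) := forall i, (i <= N)%N -> p`_i = 0.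

Lemma small0 N : small N 0.
Proof. by move=> i _; rewrite coef0. Qed.
Lemma smallD N p q : small N p -> small N q -> small N (p + q).
Proof. by move=> hp hq i hi; rewrite coefD hp // hq // addr0. Qed.
Lemma smallN N p : small N p -> small N (- p).
Proof. by move=> hp i hi; rewrite coefN hp // oppr0. Qed.
Lemma smallM N p q : small N q -> small N (p * q).
Proof.
move=> hq i hi; rewrite coefM big1 // => j _.
rewrite hq ?mulr0 //; apply: leq_trans hi; exact: leq_subr.
Qed.
Lemma smallMr N p q : small N q -> small N (q * p).
Proof. by rewrite mulrC; apply: smallM. Qed.
Lemma small_th N p : small N p -> small N (th p).
Proof. by move=> hp i hi; rewrite coef_th hp // mul0r. Qed.

Definition eqm N p q := small N (p - q).
Lemma eqm_refl N p : eqm N p p.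
Proof. by rewrite /eqm subrr; apply: small0. Qed.
Lemma eqm_sym N p q : eqm N p q -> eqm N q p.
Proof. by rewrite /eqm => h; rewrite -opprB; apply: smallN. Qed.
Lemma eqm_trans N p q r : eqm N p q -> eqm N q r -> eqm N p r.
Proof. by rewrite /eqm => h1 h2; rewrite (_ : p - r = (p - q) + (q - r)); [apply: smallD | ring]. Qed.
Lemma eqm_eq N p q : p = q -> eqm N p q.
Proof. by move=> ->; apply: eqm_refl. Qed.
Lemma eqmD N p q r s : eqm N p q -> eqm N r s -> eqm N (p + r) (q + s).
Proof. by rewrite /eqm => h1 h2; rewrite (_ : p + r - (q + s) = (p - q) + (r - s)); [apply: smallD | ring]. Qed.
Lemma eqmN N p q : eqm N p q -> eqm N (- p) (- q).
Proof. by rewrite /eqm => h; rewrite (_ : - p - - q = - (p - q)); [apply: smallN | ring]. Qed.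
Lemma eqmB N p q r s : eqm N p q -> eqm N r s -> eqm N (p - r) (q - s).
Proof. by move=> h1 h2; apply: eqmD => //; apply: eqmN. Qed.
Lemma eqmMl N r p q : eqm N p q -> eqm N (r * p) (r * q).
Proof. by rewrite /eqm => h; rewrite -mulrBr; apply: smallM. Qed.
Lemma eqmMr N r p q : eqm N p q -> eqm N (p * r) (q * r).
Proof. by rewrite /eqm => h; rewrite -mulrBl; apply: smallMr. Qed.
Lemma eqm_th N p q : eqm N p q -> eqm N (th p) (th q).
Proof. by rewrite /eqm => h; rewrite -thB; apply: small_th. Qed.


Lemma a0 : asinh_coef 0 = 1.
Proof. by rewrite /asinh_coef /= expr0 mul1r muln0 fact0. Qed.

Lemma aux_stable j : forall f1 f2, (j < f1)%N -> (j < f2)%N ->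
  inv_coef_aux f1 j = inv_coef_aux f2 j.
Proof.
elim/ltn_ind: j => j IH [|f1] [|f2] // h1 h2 /=.
case: j IH h1 h2 => [|j] IH h1 h2 //; congr (- _); apply: eq_bigr => k _.
congr (_ * _); apply: IH => //; apply: leq_trans (ltn_ord k) _; lia.
Qed.

Lemma inv_rec k : inv_coef k.+1 =
  - \sum_(j < k.+1) asinh_coef (k.+1 - j) * inv_coef j.
Proof.
have e : forall f n, inv_coef_aux f.+1 n.+1 =
  - \sum_(k < n.+1) asinh_coef (n.+1 - k) * inv_coef_aux f k by [].
rewrite /inv_coef e; congr (- _); apply: eq_bigr => j _; congr (_ * _).
apply: aux_stable => //; apply: leq_trans (ltn_ord j) _; lia.
Qed.

Lemma inv0 : inv_coef 0 = 1.
Proof. by []. Qed.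

Definition Apol N := \poly_(k < N.+1) asinh_coef k.
Definition gpol N := \poly_(k < N.+1) inv_coef k.

Lemma E1 N : eqm N (gpol N * Apol N) 1.
Proof.
move=> i hi; rewrite coefB coefM coefC.
have -> : \sum_(j < i.+1) (gpol N)`_j * (Apol N)`_(i - j) =
   \sum_(j < i.+1) inv_coef j * asinh_coef (i - j).
  apply: eq_bigr => j _; rewrite /gpol /Apol !coef_poly.
  have hj : (j < N.+1)%N by apply: leq_trans (ltn_ord j) _.
  have hj' : (i - j < N.+1)%N by lia.
  by rewrite hj hj'.
case: i hi => [|k] hi.
  by rewrite big_ord1 /= a0 inv0 mulr1 subrr.
rewrite big_ord_recr /= subnn a0 mulr1 inv_rec /= subr0.
rewrite (_ : \sum_(j < k.+1) inv_coef j * asinh_coef (k.+1 - j) =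
   \sum_(j < k.+1) asinh_coef (k.+1 - j) * inv_coef j); first by rewrite subrr.
by apply: eq_bigr => j _; rewrite mulrC.
Qed.

Lemma asinh_rec k : asinh_coef k.+1 * ((2 * k + 2) * (2 * k + 3))%:R =
   - ((2 * k + 1) ^ 2)%:R * asinh_coef k.
Proof.
rewrite /asinh_coef.
have -> : (2 * k.+1 = (2 * k).+2)%N by lia.
rewrite !factS !exprS expnS.
have -> : ((2 * k).+2 = 2 * k + 2)%N by lia.
have -> : ((2 * k).+1 = 2 * k + 1)%N by lia.
have -> : (k.+1 = k + 1)%N by lia.
rewrite !(natrM, natrX, natrD).
have h1 : ((2 * k)`!)%:R != 0 :> rat by rewrite pnatr_eq0 -lt0n fact_gt0.
have h2 : (k`!)%:R != 0 :> rat by rewrite pnatr_eq0 -lt0n fact_gt0.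
have h3 : (4 ^ k)%:R != 0 :> rat by rewrite pnatr_eq0 -lt0n expn_gt0.
have hk : 0 <= k%:R :> rat by apply: ler0n.
set x := k%:R.
have h4 : 2 * x + 1 != 0 by apply/negP => /eqP; lra.
have h5 : 2 * x + 2 + 1 != 0 by apply/negP => /eqP; lra.
have h6 : x + 1 != 0 by apply/negP => /eqP; lra.
have h7 : 4 ^+ k != 0 :> rat by apply: expf_neq0.
field; rewrite ?h1 ?h2 ?h4 ?h5 ?h6 ?h7 //=.
Qed.

Definition Bpol N := Apol N + th (Apol N) *+ 2.

Lemma coefBp N i : (i <= N)%N -> (Bpol N)`_i = asinh_coef i * (2 * i + 1)%:R.
Proof.
move=> hi; rewrite /Bpol coefD coefMn coef_th /Apol coef_poly ltnS hi.
rewrite natrD natrM; ring.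
Qed.

Lemma coefMXS (p : {poly rat}) k : (p * 'X)`_k.+1 = p`_k.
Proof. by rewrite coefMX. Qed.

Definition E2e N := th (Bpol N) *+ 2 + (th (Bpol N) *+ 2) * 'X + Bpol N * 'X.

Lemma E2 N : small N (E2e N).
Proof.
move=> i hi; rewrite /E2e !coefD.
case: i hi => [|k] hi.
  by rewrite !coefMX coefMn coef_th mulr0 mul0rn !addr0.
rewrite !coef_th !coefMXS coefMn coef_th !coefBp //; last by lia.
have := asinh_rec k.
rewrite !(natrM, natrX, natrD) => h.
rewrite -[k.+1%:R]natr1 mulr2n.
set a := asinh_coef k.+1 in h *; set b := asinh_coef k in h *.
set x := k%:R in h *.
rewrite (_ : _ + _ = a * ((2 * x + 2) * (2 * x + 3)) + (2 * x + 1) ^+ 2 * b); last by ring.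
by rewrite h; ring.
Qed.

Lemma E3 N : eqm N (Bpol N * Bpol N * (1 + 'X)) 1.
Proof.
set F := Bpol N * Bpol N * (1 + 'X) - 1.
have hth : th F = Bpol N * E2e N.
  rewrite /F thB !thM (thD 1 'X) thX -polyC1 thC /E2e; rewrite polyC1; ring.
have hs : small N (th F) by rewrite hth; apply: smallM; apply: E2.
move=> i hi; case: i hi => [|k] hi.
  have h0 : (Bpol N)`_0 = 1 by rewrite coefBp // a0 mul1r muln0 add0n.
  rewrite /F coefB coefM big_ord1 coefM big_ord1 -[nat_of_ord ord0]/0%N h0 subnn.
  by rewrite coefD coef1 coefX !mul1r /= addr0 subrr.
have := hs k.+1 hi; rewrite coef_th => /eqP; rewrite mulf_eq0 pnatr_eq0 orbF.
by move/eqP.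
Qed.


Definition Pop (m : nat) (Y : {poly rat}) : {poly rat} :=
  m.+1%:R * Y + m%:R * 'X * Y - 2%:R * (1 + 'X) * th Y.
Definition Qop (m : nat) (p : {poly rat}) : {poly rat} :=
  Pop m (m%:R * p - 2%:R * th p).

Lemma Pop_eqm N m Y Z : eqm N Y Z -> eqm N (Pop m Y) (Pop m Z).
Proof.
move=> h; rewrite /Pop; apply: eqmB; first apply: eqmD.
- exact: eqmMl.
- exact: eqmMl.
- by apply: eqmMl; apply: eqm_th.
Qed.

Lemma Qop_eqm N m Y Z : eqm N Y Z -> eqm N (Qop m Y) (Qop m Z).
Proof.
move=> h; rewrite /Qop; apply: Pop_eqm; apply: eqmB; apply: eqmMl => //.
exact: eqm_th.
Qed.

Lemma Qop_scale m c p : Qop m (c%:R * p) = c%:R * Qop m p.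
Proof.
rewrite /Qop /Pop !(thB, thMn); ring.
Qed.

Lemma S2 N : eqm N (th (gpol N)) (- (gpol N * gpol N * th (Apol N))).
Proof.
have e1 := E1 N; rewrite /eqm in e1 *.
have e2 := @small_th N _ e1.
rewrite thB -polyC1 thC thM subr0 in e2.
rewrite (_ : _ - _ = gpol N * (th (gpol N) * Apol N + gpol N * th (Apol N))
   - th (gpol N) * (gpol N * Apol N - 1)); last by ring.
apply: smallD; [apply: smallM | apply: smallN; apply: smallM] => //.
Qed.

Lemma S3 N k : eqm N (th (gpol N ^+ k.+1))
   (- (k.+1%:R) * gpol N ^+ k.+1 * gpol N * th (Apol N)).
Proof.
rewrite thexp.
move: (eqmMl N (k.+1%:R * gpol N ^+ k) _ _ (S2 N)) => h.
apply: (eqm_trans _ _ _ _ h); apply: eqm_eq; rewrite exprS; ring.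
Qed.

Lemma step N k : eqm N (Qop k.+1 (gpol N ^+ k.+1))
   ((k.+1 * k.+2)%:R * gpol N ^+ k.+3).
Proof.
set m := k.+1.
set g := gpol N; set A := Apol N.
set G := g ^+ k.+2.
set Z := m%:R * G * Bpol N.
have hY : eqm N (m%:R * g ^+ m - 2%:R * th (g ^+ m)) Z.
  have e1 := S3 N k; have e0 := E1 N.
  rewrite /eqm in e1 e0 *.
  rewrite (_ : _ - Z = - 2%:R * (th (g ^+ m) - (- (k.+1%:R) * g ^+ k.+1 * g * th A))
     - m%:R * g ^+ m * (g * A - 1)).
    by apply: smallD; [apply: smallM | apply: smallN; apply: smallM].
  rewrite /Z /G /Bpol -/A /m !exprSr; ring.
apply: (eqm_trans _ _ _ _ (Pop_eqm N m _ _ hY)).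
have e1 := S3 N k.+1; have e0 := E1 N; have e2 := E2 N; have e3 := E3 N.
rewrite /eqm in e1 e0 e3 *.
rewrite -/g -/A -/G in e1 e0.
set T := th G in e1 *.
set B := Bpol N in e2 e3 *.
rewrite (_ : Pop m Z - _ = (m * m.+1)%:R * G * g * (B * B * (1 + 'X) - 1)
   - (m * m.+1)%:R * (1 + 'X) * G * B * (g * A - 1)
   - 2%:R * m%:R * (1 + 'X) * B * (T - (- (k.+2%:R)) * G * g * th A)
   - m%:R * G * E2e N).
  apply: smallD; [apply: smallD; [apply: smallD; [apply: smallM; exact: e3 |
    apply: smallN; apply: smallM; exact: e0] | apply: smallN; apply: smallM; exact: e1] |
    apply: smallN; apply: smallM; exact: e2].
rewrite /Pop /Z (thM (m%:R * G) B) (thMn m G) /E2e -/B.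
set tB := th B.
have hB : B = A + th A *+ 2 by [].
rewrite hB -/T (exprSr g k.+2) -/G /m; ring.
Qed.

Lemma chain N : eqm N (Qop 5 (Qop 3 (Qop 1 (gpol N)))) (720%:R * gpol N ^+ 7).
Proof.
have h1 := step N 0; rewrite expr1 in h1.
have h3 := step N 2; have h5 := step N 4.
apply: (eqm_trans _ _ _ _ (Qop_eqm N 5 _ _ (Qop_eqm N 3 _ _ h1))).
rewrite Qop_scale.
apply: (eqm_trans _ _ _ _ (Qop_eqm N 5 _ _ (eqmMl N _ _ _ h3))).
rewrite mulrA -natrM Qop_scale.
apply: (eqm_trans _ _ _ _ (eqmMl N _ _ _ h5)).
by apply: eqm_eq; rewrite mulrA -!natrM.
Qed.

Lemma coefQ m p i : (Qop m p)`_i.+1 =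
  (m.+1%:R - 2 * i.+1%:R) * (m%:R - 2 * i.+1%:R) * p`_i.+1
  + (m%:R - 2 * i%:R) ^+ 2 * p`_i.
Proof.
set Y := (m%:R)%:P * p - 2%:P * th p.
have -> : Qop m p = (m.+1%:R)%:P * Y + (m%:R)%:P * (Y * 'X) - 2%:P * th Y
   - 2%:P * (th Y * 'X).
  by rewrite /Qop /Pop /Y !polyC_natr; ring.
have -> : th Y = (m%:R)%:P * th p - 2%:P * th (th p).
  by rewrite /Y thB !thM !thC !mul0r !add0r.
rewrite /Y !(coefD, coefB, coefN, coefCM) !coef_th !coefMXS !(coefD, coefB, coefN, coefCM) !coef_th.
rewrite -natr1.
ring.
Qed.


Lemma coef_g7 n : (gpol n ^+ 7)`_n =
  \sum_(i : {ffun 'I_7 -> 'I_n.+1} | (\sum_(j < 7) (i j : nat))%N == n)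
     \prod_(j < 7) inv_coef (i j).
Proof.
have -> : gpol n ^+ 7 = \prod_(j < 7) gpol n by rewrite prodr_const card_ord.
rewrite /gpol poly_def.
rewrite (bigA_distr_bigA (fun (j : 'I_7) (k : 'I_n.+1) => inv_coef k *: 'X^k)).
rewrite coef_sum [RHS]big_mkcond /=; apply: eq_bigr => f _.
rewrite (eq_bigr (fun j => (inv_coef (f j))%:P * 'X^(f j))); last by move=> j _; rewrite mul_polyC.
rewrite big_split /= prodrXr -rmorph_prod coefCM coefXn eq_sym.
by case: eqP => _; rewrite ?mulr1 ?mulr0.
Qed.

Lemma conv_g7 n : conv_pow 7 n = ((2 * n)`!)%:R * (gpol n ^+ 7)`_n.
Proof.
rewrite coef_g7 mulr_sumr /conv_pow; apply: eq_bigr => f _.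
rewrite /C2 big_split /= -mulrA; congr (_ * _).
rewrite mulrA mulVf ?mul1r //.
rewrite -natr_prod pnatr_eq0 -lt0n; apply/prodn_gt0 => j; exact: fact_gt0.
Qed.


Lemma gcoef n j : (j <= n)%N -> (gpol n)`_j = inv_coef j.
Proof. by move=> h; rewrite /gpol coef_poly ltnS h. Qed.

Lemma natS_r k : (k.+1%:R : rat) = k%:R + 1.
Proof. by rewrite natr1. Qed.

Lemma natS_add a k : ((k + a)%:R : rat) = k%:R + a%:R.
Proof. by rewrite natrD. Qed.

Lemma binr a k : ('C(a, k))%:R = (a ^_ k)%:R / (k`!)%:R :> rat.
Proof.
rewrite -bin_ffact natrM mulfK // pnatr_eq0 -lt0n; exact: fact_gt0.
Qed.

Theorem mainTheorem9 (n : nat) : (3 <= n)%N ->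
  conv_pow 7 n =
    ('C(2 * n - 1, 6))%:R * C2 n
  + (12 * n%:R ^+ 2 - 60 * n%:R + 83) / 15
      * ('C(2 * n, 2))%:R * ('C(2 * n - 3, 4))%:R * C2 (n - 1)
  + (4 * n%:R ^+ 2 - 24 * n%:R + 39) * (12 * n%:R ^+ 2 - 72 * n%:R + 109) / 15
      * ('C(2 * n, 4))%:R * ('C(2 * n - 5, 2))%:R * C2 (n - 2)
  + ('C(2 * n, 6))%:R * (2 * n%:R - 7) ^+ 6 * C2 (n - 3) :> rat.
Proof.
move=> hn.
have h720 : (720 : rat) != 0 by rewrite pnatr_eq0.
have := chain n n (leqnn n).
rewrite coefB -polyC_natr coefCM => /subr0_eq hc.
have hc' : (gpol n ^+ 7)`_n = (Qop 5 (Qop 3 (Qop 1 (gpol n))))`_n / 720.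
  by rewrite hc [_ / 720]mulrC (mulKf h720).
rewrite conv_g7 hc'.
have [p ep] : exists p, n = p.+3 by exists (n - 3)%N; lia.
rewrite ep !coefQ.
rewrite !(@gcoef p.+3); try lia.
rewrite /C2.
have -> : (2 * p.+3 - 1 = (2 * p).+3.+2)%N by lia.
have -> : (2 * p.+3 - 3 = (2 * p).+3)%N by lia.
have -> : (2 * p.+3 - 5 = (2 * p).+1)%N by lia.
have -> : (p.+3 - 1 = p.+2)%N by lia.
have -> : (p.+3 - 2 = p.+1)%N by lia.
have -> : (p.+3 - 3 = p)%N by lia.
have -> : (2 * p.+3 = (2 * p).+3.+3)%N by lia.
have -> : (2 * p.+2 = (2 * p).+4)%N by lia.
have -> : (2 * p.+1 = (2 * p).+2)%N by lia.
rewrite !binr !ffactnS !ffactn0 !factS.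
rewrite !natrM.
rewrite !(natS_add (2 * p) 6) !(natS_add (2 * p) 5) !(natS_add (2 * p) 4) !(natS_add (2 * p) 3)
  !(natS_add (2 * p) 2) !(natS_add (2 * p) 1) !(natS_add p 3) !(natS_add p 2) !(natS_add p 1).
rewrite fact0 !natrM.
set x := p%:R; set F := ((2 * p)`!)%:R.
set b0 := inv_coef p.+3; set b1 := inv_coef p.+2; set b2 := inv_coef p.+1; set b3 := inv_coef p.
by field.
Qed.
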